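(* Let $G$ be a group acting linearly and isometrically on a real Hilbert space $M$, and $X$ a random variable with $\mathbb{E}(\|X\|^2)<+\infty$ and $t_0=\mathbb{E}(X)\neq0$. Assume there exist $a>0$ and a $C^1$ map $\varphi:(-a,a)\to M$ with values in $[t_0]$, $\varphi(0)=t_0$ and $\varphi'(0)=v\neq0$, and assume $\mathbb{P}(X\notin v^\perp)>0$. Then $\mathbb{P}\big(\sup_{g\in G}\langle g\cdot X,t_0\rangle>\langle X,t_0\rangle\big)>0$ and $[t_0]$ is not a Fréchet mean of $[X]$.
   Context: $M$ is a real Hilbert space with inner product $\langle\cdot,\cdot\rangle$ and norm $\|\cdot\|$; the action is linear and isometric ($\|g\cdot x\|=\|x\|$). $[m]=\{g\cdot m:g\in G\}$, $v^\perp=\{x:\langle x,v\rangle=0\}$. $F(m)=\mathbb{E}\big(\inf_{g}\|g\cdot X-m\|^2\big)$ and $[m_\star]$ is a Fréchet mean of $[X]$ if $m_\star$ globally minimises $F$. *)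

(* Defs.v *)
From HB Require Import structures.
From mathcomp Require Import all_boot all_order all_algebra.
From mathcomp Require Import all_classical all_reals all_analysis.
Set Implicit Arguments. Unset Strict Implicit. Unset Printing Implicit Defensive.
Import Order.TTheory GRing.Theory Num.Theory.
Import numFieldNormedType.Exports.
Local Open Scope classical_set_scope.
Local Open Scope ring_scope.

(* [ip] is an inner product on the real normed space [M] inducing its norm.
   Together with completeness of [M] this makes [M] a real Hilbert space. *)
Definition is_inner_product (R : realType) (M : normedModType R)
  (ip : M -> M -> R) : Prop :=
  [/\ (forall x y, ip x y = ip y x),
      (forall x y z, ip (x + y) z = ip x z + ip y z),
      (forall (a : R) x y, ip (a *: x) y = a * ip x y) &
      (forall x, ip x x = `|x| ^+ 2)].

Definition is_group (G : Type) (mul : G -> G -> G) (one : G) (inv : G -> G) : Prop :=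
  [/\ (forall a b c, mul a (mul b c) = mul (mul a b) c),
      (forall a, mul one a = a),
      (forall a, mul a one = a),
      (forall a, mul (inv a) a = one) &
      (forall a, mul a (inv a) = one)].

Definition is_lin_isom_action (R : realType) (M : normedModType R) (G : Type)
  (mul : G -> G -> G) (one : G) (act : G -> M -> M) : Prop :=
  [/\ (forall x, act one x = x),
      (forall g h x, act (mul g h) x = act g (act h x)),
      (forall g x y, act g (x + y) = act g x + act g y),
      (forall g (a : R) x, act g (a *: x) = a *: act g x) &
      (forall g x, `|act g x| = `|x|)].

Definition gorbit (R : realType) (M : normedModType R) (G : Type)
  (act : G -> M -> M) (m : M) : set M := [set act g m | g in [set: G]].

(* inf_g || g.x - m ||^2 (a set of nonnegative reals, so the inf is meaningful) *)
Definition orbit_dist2 (R : realType) (M : normedModType R) (G : Type)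
  (act : G -> M -> M) (x m : M) : R :=
  inf [set `|act g x - m| ^+ 2 | g in [set: G]].

Definition frechet_fun (R : realType) (M : normedModType R) (G : Type)
  (act : G -> M -> M) d (Omega : measurableType d) (P : probability Omega R)
  (X : Omega -> M) (m : M) : \bar R :=
  (\int[P]_w (orbit_dist2 act (X w) m)%:E)%E.

Definition is_frechet_mean (R : realType) (M : normedModType R) (G : Type)
  (act : G -> M -> M) d (Omega : measurableType d) (P : probability Omega R)
  (X : Omega -> M) (mstar : M) : Prop :=
  forall m, (frechet_fun act P X mstar <= frechet_fun act P X m)%E.

(* t0 = E(X), in the (weak/Pettis) sense: E <X, y> = <t0, y> for all y *)
Definition is_expectation (R : realType) (M : normedModType R) (ip : M -> M -> R)
  d (Omega : measurableType d) (P : probability Omega R) (X : Omega -> M) (t0 : M) : Prop :=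
  forall y, P.-integrable [set: Omega] (fun w => (ip (X w) y)%:E) /\
            (\int[P]_w (ip (X w) y)%:E = (ip t0 y)%:E)%E.

(* Main.v *)
Require Import Defs.
From HB Require Import structures.
From mathcomp Require Import all_boot all_order all_algebra.
From mathcomp Require Import all_classical all_reals all_analysis.
From mathcomp Require Import ring lra.
From mathcomp Require Import measurable_realfun.
Import Order.TTheory GRing.Theory Num.Theory.
Import numFieldNormedType.Exports.
Local Open Scope classical_set_scope.
Local Open Scope ring_scope.

Section Inner.
Variables (R : realType) (M : normedModType R) (ip : M -> M -> R).
Hypothesis hip : is_inner_product ip.

Lemma ipC x y : ip x y = ip y x. Proof. by case: hip. Qed.
Lemma ipDl x y z : ip (x + y) z = ip x z + ip y z. Proof. by case: hip. Qed.
Lemma ipZl (a : R) x y : ip (a *: x) y = a * ip x y. Proof. by case: hip. Qed.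
Lemma ipxx x : ip x x = `|x| ^+ 2. Proof. by case: hip. Qed.
Lemma ipDr x y z : ip z (x + y) = ip z x + ip z y.
Proof. by rewrite ipC ipDl !(ipC z). Qed.
Lemma ipZr (a : R) x y : ip y (a *: x) = a * ip y x.
Proof. by rewrite ipC ipZl ipC. Qed.
Lemma ipNl x y : ip (- x) y = - ip x y.
Proof. by rewrite -scaleN1r ipZl mulN1r. Qed.
Lemma ipNr x y : ip y (- x) = - ip y x.
Proof. by rewrite ipC ipNl ipC. Qed.
Lemma ip0l y : ip 0 y = 0.
Proof. by rewrite -(scale0r (0 : M)) ipZl mul0r. Qed.

Lemma ip_sq x y : `|x - y| ^+ 2 = `|x| ^+ 2 - 2 * ip x y + `|y| ^+ 2.
Proof.
rewrite -!ipxx ipDl !ipDr !ipNl !ipNr (ipC y x); lra.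
Qed.

Lemma ip_polar x y : ip x y = (`|x + y| ^+ 2 - `|x| ^+ 2 - `|y| ^+ 2) / 2.
Proof.
rewrite -!ipxx ipDl !ipDr (ipC y x); lra.
Qed.

Lemma ip_le2 x y : 2 * ip x y <= `|x| ^+ 2 + `|y| ^+ 2.
Proof.
have := ip_sq x y; have : 0 <= `|x - y| ^+ 2 by rewrite sqr_ge0. lra.
Qed.

Lemma ip_CS x y : ip x y <= `|x| * `|y|.
Proof.
have [->|x0] := eqVneq x 0; first by rewrite ip0l normr0 mul0r.
have [->|y0] := eqVneq y 0; first by rewrite ipC ip0l normr0 mulr0.
have nx : 0 < `|x| by rewrite normr_gt0.
have ny : 0 < `|y| by rewrite normr_gt0.
have := ip_le2 (`|x|^-1 *: x) (`|y|^-1 *: y).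
rewrite ipZl ipZr !normrZ !normfV !normr_id !mulVf ?gt_eqF// expr1n.
move=> h.
have h2 : `|x|^-1 * (`|y|^-1 * ip x y) <= 1 by lra.
set t := `|x|^-1 * (`|y|^-1 * ip x y) in h2.
have -> : ip x y = `|x| * `|y| * t by rewrite /t; field; rewrite !gt_eqF.
by rewrite ler_piMr// mulr_ge0.
Qed.
End Inner.
Arguments ipC {R M ip}.
Arguments ipDl {R M ip}.
Arguments ipZl {R M ip}.
Arguments ipxx {R M ip}.
Arguments ipDr {R M ip}.
Arguments ipZr {R M ip}.
Arguments ipNl {R M ip}.
Arguments ipNr {R M ip}.
Arguments ip0l {R M ip}.
Arguments ip_sq {R M ip}.
Arguments ip_polar {R M ip}.
Arguments ip_le2 {R M ip}.
Arguments ip_CS {R M ip}.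

Lemma inf_affine (R : realType) (T : Type) (t : T) (f : T -> R) (c k B : R) :
  0 <= k -> (forall g, f g <= B) ->
  inf [set c - k * f g | g in [set: T]] = c - k * sup [set f g | g in [set: T]].
Proof.
move=> k0 fB.
have hA : has_ubound [set f g | g in [set: T]].
  by exists B => _ [g _ <-].
have nA : [set f g | g in [set: T]] !=set0 by exists (f t), t.
rewrite /inf.
have -> : -%R @` [set c - k * f g | g in [set: T]] = [set k * f g - c | g in [set: T]].
  apply/seteqP; split => x /=.
    by move=> [y [g _ <-] <-]; exists g => //; rewrite opprB.
  by move=> [g _ <-]; exists (c - k * f g); [exists g|rewrite opprB].
set S := sup [set f g | g in [set: T]].
have [->|kn0] := eqVneq k 0.
  have -> : [set 0 * f g - c | g in [set: T]] = [set - c].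
    apply/seteqP; split => x /=; first by move=> [g _ <-]; rewrite mul0r sub0r.
    by move=> ->; exists t => //; rewrite mul0r sub0r.
  by rewrite sup1 opprK mul0r subr0.
have kp : 0 < k by rewrite lt_neqAle eq_sym kn0.
have hB : has_ubound [set k * f g - c | g in [set: T]].
  by exists (k * B - c) => _ [g _ <-]; rewrite lerD2r ler_pM2l.
have nB : [set k * f g - c | g in [set: T]] !=set0 by exists (k * f t - c), t.
suff -> : sup [set k * f g - c | g in [set: T]] = k * S - c by rewrite opprB.
apply/le_anti/andP; split.
  apply: ge_sup => // _ [g _ <-]; rewrite lerD2r ler_pM2l//.
  by apply: ub_le_sup => //; exists g.
have : S <= (sup [set k * f g - c | g in [set: T]] + c) / k.
  apply: ge_sup => // _ [g _ <-]; rewrite ler_pdivlMr//.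
  have Hg : [set k * f g - c | g in [set: T]] (k * f g - c) by exists g.
  have := ub_le_sup hB Hg.
  lra.
rewrite ler_pdivlMr//; lra.
Qed.

Section Act.
Variables (R : realType) (M : normedModType R) (ip : M -> M -> R).
Hypothesis hip : is_inner_product ip.
Variables (G : Type) (mul : G -> G -> G) (one : G) (inv : G -> G) (act : G -> M -> M).
Hypothesis hG : is_group mul one inv.
Hypothesis hact : is_lin_isom_action mul one act.

Lemma act_norm g x : `|act g x| = `|x|. Proof. by case: hact. Qed.
Lemma actD g x y : act g (x + y) = act g x + act g y. Proof. by case: hact. Qed.
Lemma actZ g (a : R) x : act g (a *: x) = a *: act g x. Proof. by case: hact. Qed.
Lemma act_one x : act one x = x. Proof. by case: hact. Qed.
Lemma act_mul g h x : act (mul g h) x = act g (act h x). Proof. by case: hact. Qed.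

Lemma ip_act g x y : ip (act g x) (act g y) = ip x y.
Proof. by rewrite !(ip_polar hip) -actD !act_norm. Qed.

Lemma ip_act_inv g x y : ip (act (inv g) x) y = ip x (act g y).
Proof.
rewrite -(ip_act g) -act_mul.
have -> : mul g (inv g) = one by case: hG.
by rewrite act_one.
Qed.

Definition ssup (x t0 : M) := sup [set ip (act g x) t0 | g in [set: G]].

Lemma ip_act_le g x t0 : ip (act g x) t0 <= `|x| * `|t0|.
Proof. by rewrite -(act_norm g x) (ip_CS hip). Qed.

Lemma ssup_ge x t0 : ip x t0 <= ssup x t0.
Proof.
apply: ub_le_sup; first by exists (`|x| * `|t0|) => _ [g _ <-]; exact: ip_act_le.
by exists one => //; rewrite act_one.
Qed.

Lemma ssup_ge_act g x t0 : ip (act g x) t0 <= ssup x t0.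
Proof.
apply: ub_le_sup; first by exists (`|x| * `|t0|) => _ [h _ <-]; exact: ip_act_le.
by exists g.
Qed.

Lemma orbit_dist2_formula x t0 (l : R) : 0 <= l ->
  orbit_dist2 act x (l *: t0) = `|x| ^+ 2 + l ^+ 2 * `|t0| ^+ 2 - 2 * l * ssup x t0.
Proof.
move=> l0; rewrite /orbit_dist2.
rewrite (eq_imagel (f' := fun g => (`|x| ^+ 2 + l ^+ 2 * `|t0| ^+ 2)
   - (2 * l) * ip (act g x) t0)); last first.
  move=> g _; rewrite (ip_sq hip) act_norm (ipZr hip) normrZ exprMn ger0_norm//.
  ring.
rewrite (@inf_affine _ _ one _ _ _ (`|x| * `|t0|)) //.
- by rewrite mulr_ge0.
- by move=> g; exact: ip_act_le.
Qed.

End Act.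
Arguments ssup {R M} ip {G} act x t0.
Arguments orbit_dist2_formula {R M ip} hip {G mul one act} hact x t0 l _.
Arguments ssup_ge {R M ip} hip {G mul one act} hact x t0.
Arguments ssup_ge_act {R M ip} hip {G mul one act} hact g x t0.
Arguments ip_act_le {R M ip} hip {G mul one act} hact g x t0.
Arguments ip_act_inv {R M ip} hip {G mul one inv act} hG hact g x y.


Lemma dnbhs_right (R : realType) (P : R -> Prop) :
  (\forall h \near 0^', P h) -> (\forall h \near 0^'+, P h).
Proof.
rewrite !near_withinE; apply: filterS => x hx xp; apply: hx.
by rewrite gt_eqF.
Qed.

Lemma dnbhs_left (R : realType) (P : R -> Prop) :
  (\forall h \near 0^', P h) -> (\forall h \near 0^'-, P h).
Proof.
rewrite !near_withinE; apply: filterS => x hx xp; apply: hx.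
by rewrite lt_eqF.
Qed.

Lemma ip_abs (R : realType) (M : normedModType R) (ip : M -> M -> R) :
  is_inner_product ip -> forall x y, `|ip x y| <= `|x| * `|y|.
Proof.
move=> hip x y; rewrite ler_norml (ip_CS hip) andbT.
have := ip_CS hip (- x) y; rewrite (ipNl hip) normrN; lra.
Qed.

Arguments ip_abs {R M ip}.
Lemma ipBr (R : realType) (M : normedModType R) (ip : M -> M -> R) :
  is_inner_product ip -> forall x y z, ip z (x - y) = ip z x - ip z y.
Proof. by move=> hip x y z; rewrite (ipDr hip) (ipNr hip). Qed.

Arguments ipBr {R M ip}.
Lemma deriv_sign (R : realType) (M : normedModType R) (ip : M -> M -> R)
  (phi : R -> M) (a : R) (y v : M) : is_inner_product ip ->
  0 < a -> derivable phi 0 1 -> derive1 phi 0 = v -> ip y v != 0 ->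
  exists h, - a < h < a /\ ip y (phi 0) < ip y (phi h).
Proof.
move=> hip a0 hd hv c0.
set q := fun h : R => h^-1 *: ((phi \o shift 0) (h *: 1) - phi 0).
have cv : q @ 0^' --> v by rewrite -hv derive1E; exact: hd.
set c := ip y v.
have cp : 0 < `|c| by rewrite normr_gt0.
have e0 : 0 < `|c| / (`|y| + 1) by rewrite divr_gt0 // ltr_wpDl.
have := (cvgrPdist_lt _ _).1 cv _ e0.
have key : forall h, h != 0 -> `|v - q h| < `|c| / (`|y| + 1) ->
    0 < c * h^-1 * (ip y (phi h) - ip y (phi 0)).
  move=> h h0 hl.
  have eq1 : ip y (q h) = h^-1 * (ip y (phi h) - ip y (phi 0)).
    rewrite /q (ipZr hip) /= (ipBr hip) addr0.
    by have -> : h%:A = h by rewrite /GRing.scale /= mulr1.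
  have eq2 : ip y (q h) = c - ip y (v - q h).
    rewrite (ipBr hip) /c; ring.
  have b1 : `|ip y (v - q h)| < `|c|.
    apply: (le_lt_trans (ip_abs hip y (v - q h))).
    have yp : 0 <= `|y| by [].
    have : `|y| * `|v - q h| <= `|y| * (`|c| / (`|y| + 1)).
      by rewrite ler_wpM2l // ltW.
    move=> hh; apply: (le_lt_trans hh).
    rewrite mulrA ltr_pdivrMr; last by rewrite ltr_wpDl.
    rewrite mulrC ltr_pM2l //; lra.
  rewrite -mulrA -eq1 eq2.
  set e := ip y (v - q h) in b1 *.
  have h1 : c * e <= `|c| * `|e| by rewrite -normrM ler_norm.
  have h2 : `|c| * `|e| < `|c| * `|c| by rewrite ltr_pM2l.
  have h3 : `|c| * `|c| = c * c by rewrite -normrM ger0_norm // -expr2 sqr_ge0.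
  lra.
have H : \forall t \near 0^', `|v - q t| < `|c| / (`|y| + 1).
  by apply: (cvgrPdist_lt _ _).1 cv _ e0.
have Hk : \forall h \near 0^', 0 < c * h^-1 * (ip y (phi h) - ip y (phi 0)).
  move: H; rewrite !near_withinE; apply: filterS => h hh h0.
  exact: key h0 (hh h0).
move: c0; rewrite neq_lt => /orP[cneg|cpos].
- have Hr := @dnbhs_left _ _ Hk.
  have : \forall h \near 0^'-, 0 < c * h^-1 * (ip y (phi h) - ip y (phi 0))
      /\ h < 0 /\ 0 - h < a.
    near=> h; split; [near: h; exact: Hr|split; near: h].
      exact: nbhs_left_lt.
    exact: nbhs_left_ltBl.
  move=> /filter_ex [h [H1 [H2 H3]]]; exists h; split; first by apply/andP; lra.
  move: H1; rewrite pmulr_rgt0 ?subr_gt0 //.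
  by rewrite nmulr_rgt0 // invr_lt0.
- have Hr := @dnbhs_right _ _ Hk.
  have : \forall h \near 0^'+, 0 < c * h^-1 * (ip y (phi h) - ip y (phi 0))
      /\ 0 < h /\ h < a.
    near=> h; split; [near: h; exact: Hr|split; near: h].
      exact: nbhs_right_gt.
    exact: nbhs_right_lt.
  move=> /filter_ex [h [H1 [H2 H3]]]; exists h; split; first by apply/andP; lra.
  move: H1; rewrite pmulr_rgt0 ?subr_gt0 //.
  by rewrite mulr_gt0 // invr_gt0.
Unshelve. all: by end_near.
Qed.

Arguments deriv_sign {R M ip phi a y v}.


Section Integ.
Variables (R : realType) (d : measure_display) (Omega : measurableType d)
  (P : probability Omega R).

Lemma lincomb (f1 f2 f3 : Omega -> R) (a b c e : R) :
  P.-integrable setT (EFin \o f1) -> P.-integrable setT (EFin \o f2) ->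
  P.-integrable setT (EFin \o f3) ->
  (\int[P]_w (a * f1 w + b * f2 w + c * f3 w + e)%:E =
   (a * fine (\int[P]_w (f1 w)%:E) + b * fine (\int[P]_w (f2 w)%:E)
    + c * fine (\int[P]_w (f3 w)%:E) + e)%:E)%E.
Proof.
move=> i1 i2 i3.
have j1 := integrableZl measurableT a i1.
have j2 := integrableZl measurableT b i2.
have j3 := integrableZl measurableT c i3.
have j4 := finite_measure_integrable_cst P e (@measurableT _ Omega).
rewrite (eq_integral (fun w => ((a%:E * (EFin \o f1) w + b%:E * (EFin \o f2) w)
   + c%:E * (EFin \o f3) w) + (EFin \o cst e) w)%E); last first.
  by move=> w _ /=; rewrite !EFinD !EFinM.
rewrite integralD //; last by apply: integrableD => //; exact: integrableD.
rewrite integralD //; last exact: integrableD.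
rewrite integralD //.
rewrite !integralZl // (integral_cst P measurableT e%:E).
match goal with |- context [(e%:E * ?X)%E] => rewrite (_ : X = 1%E) ?mule1; last exact: probability_setT end.
rewrite -[(\int[P]_x (EFin \o f1) x)%E](fineK (integrable_fin_num measurableT i1)).
rewrite -[(\int[P]_x (EFin \o f2) x)%E](fineK (integrable_fin_num measurableT i2)).
rewrite -[(\int[P]_x (EFin \o f3) x)%E](fineK (integrable_fin_num measurableT i3)).
by rewrite -!EFinM -!EFinD.
Qed.

Lemma int_pos (f : Omega -> R) : measurable_fun setT f -> (forall w, 0 <= f w) ->
  (0 < P [set w | (0 < f w)%R])%E -> (0 < \int[P]_w (f w)%:E)%E.
Proof.
move=> mf f0 Pp.
rewrite lt_neqAle integral_ge0 ?andbT; last by move=> w _; rewrite lee_fin.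
apply/negP => /eqP h0.
have mEf : measurable_fun [set: Omega] (fun w => (f w)%:E) by exact/measurable_EFinP.
have : (\int[P]_w `|(f w)%:E| = 0)%E.
  rewrite (eq_integral (fun w => (f w)%:E)); first by rewrite -h0.
  by move=> w _; rewrite gee0_abs // lee_fin.
move=> /(ae_eq_integral_abs P measurableT mEf) [N [mN PN sN]].
have mS : measurable [set w | 0 < f w].
  have := mf measurableT _ (@measurable_itv R `]0, +oo[).
  by rewrite setTI; congr measurable; apply/seteqP; split => w /=; rewrite in_itv /= andbT.
have : (P [set w | (0 < f w)%R] <= P N)%E.
  apply: le_measure; rewrite ?inE //.
  move=> w /= fw; apply: sN => /= H; move: (H I) => /= /eqP.
  by rewrite eqe gt_eqF.
by rewrite PN leNgt Pp.
Qed.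
End Integ.

Arguments lincomb {R d Omega} P {f1 f2 f3} a b c e.
Arguments int_pos {R d Omega} P {f}.


Theorem mainTheorem10 (R : realType) (M : completeNormedModType R)
  (ip : M -> M -> R) (G : Type) (mul : G -> G -> G) (one : G) (inv : G -> G)
  (act : G -> M -> M)
  (d : measure_display) (Omega : measurableType d) (P : probability Omega R)
  (X : Omega -> M) (t0 : M) (a : R) (phi : R -> M) (v : M) :
  is_inner_product ip ->
  is_group mul one inv ->
  is_lin_isom_action mul one act ->
  (* X is (weakly) measurable *)
  (forall y, measurable_fun [set: Omega] (fun w => ip (X w) y)) ->
  (* the integrand defining F is measurable, i.e. F is well defined *)
  (forall m, measurable_fun [set: Omega] (fun w => orbit_dist2 act (X w) m)) ->
  (* E ||X||^2 < +oo *)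
  (\int[P]_w (`|X w| ^+ 2)%:E < +oo)%E ->
  is_expectation ip P X t0 ->
  t0 != 0 ->
  0 < a ->
  (* phi is C^1 on (-a, a) *)
  (forall t, - a < t < a -> derivable phi t 1) ->
  {in `](- a), a[, continuous (derive1 phi)} ->
  (forall t, - a < t < a -> gorbit act t0 (phi t)) ->
  phi 0 = t0 ->
  derive1 phi 0 = v ->
  v != 0 ->
  (0 < P [set w | ip (X w) v != 0%R])%E ->
  (0 < P [set w | (ip (X w) t0 < sup [set ip (act g (X w)) t0 | g in [set: G]])%R])%E
  /\ ~ is_frechet_mean act P X t0.
Proof.
move=> hip hG hact mX mD EX2 hE t0n0 a0 hder hcont horb phi0 dphi v0 Pv.
pose Q := fun w => `|X w| ^+ 2.
pose T := `|t0| ^+ 2.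
pose s := fun w => ssup ip act (X w) t0.
pose Dw := fun w => orbit_dist2 act (X w) t0.
pose I := fun w => ip (X w) t0.
have Dl : forall l w, 0 <= l ->
    orbit_dist2 act (X w) (l *: t0) = Q w + l ^+ 2 * T - 2 * l * s w.
  by move=> l w l0; rewrite (orbit_dist2_formula hip hact).
have D0 : forall w, orbit_dist2 act (X w) 0 = Q w.
  by move=> w; rewrite -(scale0r t0) Dl //; ring.
have D1 : forall w, Dw w = Q w + T - 2 * s w.
  by move=> w; have := Dl 1 w ler01; rewrite scale1r /Dw => ->; ring.
have sge : forall w, I w <= s w := fun w => ssup_ge hip hact (X w) t0.
have sle : forall w, s w <= `|X w| * `|t0|.
  move=> w; apply: ge_sup; first by exists (ip (act one (X w)) t0), one.
  by move=> _ [g _ <-]; exact: (ip_act_le hip hact).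
have ipge : forall w, - (`|X w| * `|t0|) <= I w.
  by move=> w; have := ip_abs hip (X w) t0; rewrite ler_norml => /andP[].
have mQ : measurable_fun setT Q.
  have -> : Q = (fun w => orbit_dist2 act (X w) 0) by apply/funext => w; rewrite D0.
  exact: mD.
have iQ : P.-integrable setT (EFin \o Q).
  apply/integrableP; split; first exact/measurable_EFinP.
  rewrite (eq_integral (fun w => (Q w)%:E)) //.
  by move=> w _; rewrite gee0_abs // lee_fin sqr_ge0.
have iT : P.-integrable setT (EFin \o cst T) := finite_measure_integrable_cst P T measurableT.
have iI : P.-integrable setT (EFin \o I) := (hE t0).1.
have hI : fine (\int[P]_w (I w)%:E)%E = T by rewrite (hE t0).2 /= (ipxx hip).
have Dbnd : forall w, 0 <= Dw w <= 2 * Q w + 2 * T.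
  move=> w; rewrite D1 /Q /T; have := sle w; have := sge w; have := ipge w.
  have := sqr_ge0 (`|X w| - `|t0|); rewrite sqrrB.
  move=> *; apply/andP; split; lra.
have iD1 : P.-integrable setT (EFin \o Dw).
  apply: (@le_integrable _ _ _ P setT measurableT _
    (fun w => 2%:E * (EFin \o Q) w + 2%:E * (EFin \o cst T) w)%E).
  - exact/measurable_EFinP/mD.
  - move=> w _ /=; rewrite lee_fin.
    have /andP[h1 h2] := Dbnd w.
    by rewrite !ger0_norm // (le_trans h1 h2).
  - apply: integrableD => //; exact: integrableZl.
pose Wf := fun w => 1 * Q w + (-1) * Dw w + (-2) * I w + T.
have WfE : forall w, Wf w = 2 * (s w - I w) by move=> w; rewrite /Wf D1; ring.
have Wpos : forall w, 0 <= Wf w.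
  by move=> w; rewrite WfE mulr_ge0 // subr_ge0.
have mW : measurable_fun setT Wf.
  have -> : Wf = ((cst 1 \* Q) \+ (cst (-1) \* Dw)) \+ (cst (-2) \* I) \+ cst T by [].
  apply: measurable_funD; last exact: measurable_cst.
  apply: measurable_funD; last first.
    by apply: measurable_funM; [exact: measurable_cst|exact: mX].
  apply: measurable_funD; apply: measurable_funM; try exact: measurable_cst.
    exact: mQ.
  exact: mD.
have mS : measurable [set w | 0 < Wf w].
  have := mW measurableT _ (@measurable_itv R `]0, +oo[).
  by rewrite setTI; congr measurable; apply/seteqP; split => w /=; rewrite in_itv /= andbT.
have mV : measurable [set w | ip (X w) v != 0].
  have := mX v measurableT _ (measurableC (@measurable_set1 R 0)).
  by rewrite setTI; congr measurable; apply/seteqP; split => w /=; move/eqP.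
have sub : [set w | ip (X w) v != 0] `<=` [set w | 0 < Wf w].
  move=> w /= hv.
  have hd0 : derivable phi 0 1 by apply: hder; rewrite oppr_lt0 a0.
  have [h [hh hlt]] := deriv_sign hip a0 hd0 dphi hv.
  have [g _ hg] := horb h hh.
  rewrite -hg -(ip_act_inv hip hG hact) phi0 in hlt.
  have := ssup_ge_act hip hact (inv g) (X w) t0.
  rewrite WfE -/(s w) => h2.
  rewrite mulr_gt0 // subr_gt0; exact: (lt_le_trans hlt h2).
have PW : (0 < P [set w | (0 < Wf w)%R])%E.
  apply: (lt_le_trans Pv); apply: le_measure; rewrite ?inE //.
split.
  have -> : [set w | (ip (X w) t0 < sup [set ip (act g (X w)) t0 | g in [set: G]])%R]
          = [set w | 0 < Wf w].
    apply/seteqP; split => w /=; rewrite WfE pmulr_rgt0 // subr_gt0 //.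
  exact: PW.
move=> Hf.
have EW := lincomb P 1 (-1) (-2) T iQ iD1 iI.
have Wp := int_pos P mW Wpos PW.
rewrite /Wf EW hI lte_fin in Wp.
set q := fine (\int[P]_w (Q w)%:E)%E in Wp.
set j := fine (\int[P]_w (Dw w)%:E)%E in Wp.
have Tp : 0 < T by rewrite /T exprn_gt0 // normr_gt0.
pose W := q - j - T.
have WP : 0 < W by rewrite /W; lra.
pose eps := W / (2 * T).
have epsT : eps * T = W / 2 by rewrite /eps; field; rewrite gt_eqF.
have epsP : 0 < eps by rewrite /eps divr_gt0 // mulr_gt0.
pose l := 1 + eps.
have := Hf (l *: t0); rewrite /frechet_fun.
rewrite [Z in (_ <= Z)%E](eq_integral (fun w => ((1 - l) * Q w + l * Dw w + 0 * I w + l * (l - 1) * T)%:E)); last first.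
  move=> w _ /=; rewrite Dl; last by rewrite /l; lra.
  congr EFin; rewrite D1; ring.
rewrite (lincomb P (1 - l) l 0 (l * (l - 1) * T) iQ iD1 iI).
rewrite -[Z in (Z <= _)%E](fineK (integrable_fin_num measurableT iD1)) lee_fin.
rewrite -/q -/j.
move=> h.
move: h; set RHS := (_ + _ + _ + _)%R => h.
have e1 : eps * (eps * T - W) = RHS - j by rewrite /RHS /l /W; ring.
have : 0 <= eps * (eps * T - W) by rewrite e1 subr_ge0.
rewrite epsT => h2.
have : eps * (W / 2 - W) < 0 by rewrite pmulr_rlt0 //; lra.
lra.
Qed.
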